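(* Let $\tau$ be a counterclockwise permutation for monotone linear functions $f_1,\dots,f_n$. Then the cyclic sequence $(f^{\tau_0},f^{\tau_1},\dots,f^{\tau_{n-1}})$ of composites of the shifts of $\tau$ is unimodal.
   Context: A linear function is $f(x)=ax+b$; monotone means $a>0$; identical means $f(x)=x$. $\vec f=(b,1-a)^\top$ and $\theta(f)\in[0,2\pi)$ is its polar angle ($\bot$ if $\vec f=0$). For a permutation $\sigma$ of $[n]$, $f^\sigma=f_{\sigma(n)}\circ\cdots\circ f_{\sigma(1)}$; all $f^\sigma$ have the same slope, so they are totally ordered by the pointwise order. $\sigma$ is counterclockwise if, after discarding positions $i$ with $f_{\sigma(i)}$ identical, there is $k$ with $\theta(f_{\sigma(k)})\le\cdots\le\theta(f_{\sigma(n)})\le\theta(f_{\sigma(1)})\le\cdots\le\theta(f_{\sigma(k-1)})$. The $k$-shift ($k=0,\dots,n-1$) is $\tau_k(i)=\tau(i+k)$ for $i\le n-k$ and $\tau_k(i)=\tau(i+k-n)$ otherwise ($\tau_0=\tau$). A cyclic sequence $(x_0,\dots,x_{n-1})$ in a totally ordered set (indices mod $n$) is unimodal if there are $k,\ell$ with $x_k\le x_{k+1}\le\cdots\le x_\ell\ge x_{\ell+1}\ge\cdots\ge x_{k-1}\ge x_k$. *)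

(* Defs.v *)
From HB Require Import structures.
From mathcomp Require Import all_boot all_order all_algebra all_fingroup.
From mathcomp Require Import reals trigo.
Set Implicit Arguments. Unset Strict Implicit. Unset Printing Implicit Defensive.
Import Order.TTheory GRing.Theory Num.Theory.
Local Open Scope ring_scope.

Section LinDefs.
Variable R : realType.
Variable n : nat.
(* The linear functions f_i(x) = a i * x + b i, indices 0-based ('I_n). *)
Variables (a b : 'I_n -> R).

Definition linf (i : 'I_n) (x : R) : R := a i * x + b i.

Definition monotone (i : 'I_n) : Prop := 0 < a i.

(* f_i is identical (f_i(x) = x), i.e. the vector (b, 1-a) is zero *)
Definition identical (i : 'I_n) : bool := (a i == 1) && (b i == 0).

(* polar angle in [0, 2 pi) of a nonzero vector (x, y) *)
Definition polar_angle (x y : R) : R :=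
  let r := Num.sqrt (x ^+ 2 + y ^+ 2) in
  if 0 <= y then acos (x / r) else 2 * pi - acos (x / r).

(* theta(f_i): polar angle of (b_i, 1 - a_i); only used for non-identical f_i *)
Definition theta (i : 'I_n) : R := polar_angle (b i) (1 - a i).

Definition perm_seq (s : 'S_n) : seq 'I_n := [seq s i | i <- enum 'I_n].

(* composite f_{s_last} o ... o f_{s_first} of the functions listed in s *)
Definition comp_seq (s : seq 'I_n) (x : R) : R := foldl (fun y i => linf i y) x s.

Definition fcomp (s : 'S_n) : R -> R := comp_seq (perm_seq s).

Definition counterclockwise (s : 'S_n) : Prop :=
  exists k : nat,
    sorted <=%R (rot k [seq theta i | i <- perm_seq s & ~~ identical i]).

(* the k-shift tau_k: tau_k(i) = tau(i + k mod n); as a sequence of values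
   it is the left rotation by k of tau(1), ..., tau(n) *)
Definition shift_seq (t : 'S_n) (k : nat) : seq 'I_n := rot k (perm_seq t).

Definition fshift (t : 'S_n) (k : nat) : R -> R := comp_seq (shift_seq t k).
End LinDefs.

Definition fle (R : realType) (f g : R -> R) : Prop := forall x, f x <= g x.

(* A cyclic sequence x_0, ..., x_{m-1} (indices mod m) in a set ordered by le
   is unimodal: there are k, l with x_k <= x_{k+1} <= ... <= x_l >= x_{l+1}
   >= ... >= x_{k-1} >= x_k.  Here l = k + j (mod m) with j < m. *)
Definition cyc_unimodal (T : Type) (le : T -> T -> Prop) (m : nat) (x : nat -> T) : Prop :=
  exists k j : nat, [/\ k < m, j < m,
    (forall i, i < j -> le (x ((k + i) %% m)%N) (x ((k + i).+1 %% m)%N)) &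
    (forall i, j <= i < m -> le (x ((k + i).+1 %% m)%N) (x ((k + i) %% m)%N))]%N.

(* Main.v *)
Require Import Defs.
From HB Require Import structures.
From mathcomp Require Import all_boot all_order all_algebra all_fingroup.
From mathcomp Require Import reals trigo.
From mathcomp Require Import lra ring zify.
Import Order.TTheory GRing.Theory Num.Theory.
Local Open Scope ring_scope.

Lemma alg1 (R : realType) (x y x' y' : R) : 0 < y -> 0 < y' ->
  x' / Num.sqrt (x'^+2 + y'^+2) <= x / Num.sqrt (x^+2 + y^+2) -> x' / y' <= x / y.
Proof.
move=> hy hy'.
set r := Num.sqrt (x^+2 + y^+2); set r' := Num.sqrt (x'^+2 + y'^+2).
have hr : 0 < r by rewrite sqrtr_gt0; nra.
have hr' : 0 < r' by rewrite sqrtr_gt0; nra.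
have er : r ^+ 2 = x^+2 + y^+2 by rewrite /r sqr_sqrtr // addr_ge0 // sqr_ge0.
have er' : r' ^+ 2 = x'^+2 + y'^+2 by rewrite /r' sqr_sqrtr // addr_ge0 // sqr_ge0.
rewrite ler_pdivrMr // mulrAC ler_pdivlMr // => H.
rewrite ler_pdivrMr // mulrAC ler_pdivlMr //.
rewrite leNgt; apply/negP => H2.
have [hx|hx] := lerP 0 x; have [hx'|hx'] := lerP 0 x'.
- have h1 : (x * y') ^+ 2 < (x' * y) ^+ 2 by rewrite ltr_pXn2r // ?nnegrE; nra.
  have h2 : (x' * r) ^+ 2 <= (x * r') ^+ 2 by rewrite ler_pXn2r // ?nnegrE; nra.
  nra.
- nra.
- nra.
- have h1 : (x' * y) ^+ 2 < (x * y') ^+ 2.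
    rewrite -(sqrrN (x' * y)) -(sqrrN (x * y')) ltr_pXn2r // ?nnegrE; nra.
  have h2 : (x * r') ^+ 2 <= (x' * r) ^+ 2.
    rewrite -(sqrrN (x' * r)) -(sqrrN (x * r')) ler_pXn2r // ?nnegrE; nra.
  nra.
Qed.


Lemma pa_t (R : realType) (x y : R) : y != 0 ->
  -1 < x / Num.sqrt (x^+2 + y^+2) < 1.
Proof.
move=> hy.
have hy2 : 0 < y ^+ 2 by rewrite exprn_even_gt0.
set r := Num.sqrt (x^+2 + y^+2).
have hr : 0 < r by rewrite sqrtr_gt0; nra.
have er : r ^+ 2 = x^+2 + y^+2 by rewrite /r sqr_sqrtr // addr_ge0 // sqr_ge0.
rewrite ltr_pdivrMr // ltr_pdivlMr //; apply/andP; split; nra.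
Qed.

Lemma pa_pos (R : realType) (x y : R) : 0 < y -> 0 < polar_angle x y < pi.
Proof.
move=> hy; have /andP[h1 h2] := @pa_t _ x _ (lt0r_neq0 hy).
rewrite /polar_angle ltW //.
by rewrite acos_gt0 ?ltW ?h1 ?h2 // acos_ltpi ?h1 ?ltW.
Qed.

Lemma pa_neg (R : realType) (x y : R) : y < 0 -> pi < polar_angle x y.
Proof.
move=> hy; have /andP[h1 h2] := @pa_t _ x _ (ltr0_neq0 hy).
rewrite /polar_angle leNgt hy /=.
have := @acos_ltpi _ (x / Num.sqrt (x ^+ 2 + y ^+ 2)).
rewrite h1 ltW //= => h; lra.
Qed.

Lemma pa_xpos (R : realType) (x : R) : 0 < x -> polar_angle x 0 = 0.
Proof.
move=> hx; rewrite /polar_angle lexx expr0n /= addr0 sqrtr_sqr gtr0_norm //.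
by rewrite divff ?acos1 // gt_eqF.
Qed.

Lemma pa_xneg (R : realType) (x : R) : x < 0 -> polar_angle x 0 = pi.
Proof.
move=> hx; rewrite /polar_angle lexx expr0n /= addr0 sqrtr_sqr ltr0_norm //.
by rewrite invrN mulrN divff ?acosN1 // lt_eqF.
Qed.

Lemma acos_anti (R : realType) (t t' : R) : -1 <= t <= 1 -> -1 <= t' <= 1 ->
  acos t <= acos t' -> t' <= t.
Proof.
move=> ht ht' h; rewrite leNgt; apply/negP => htt.
have := @ltr_cos R (acos t') (acos t).
rewrite !in_itv /= !acos_ge0 // !acos_lepi // !acosK ?in_itv //= => /(_ isT isT).
rewrite htt => /esym; rewrite ltNge h //.
Qed.

Lemma pa_mono_pos (R : realType) (x y x' y' : R) : 0 < y -> 0 < y' ->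
  polar_angle x y <= polar_angle x' y' -> x' / y' <= x / y.
Proof.
move=> hy hy'; rewrite /polar_angle (ltW hy) (ltW hy') => h.
apply: alg1 => //; apply: acos_anti h.
- by have /andP[h1 h2] := @pa_t _ x _ (lt0r_neq0 hy); rewrite !ltW.
- by have /andP[h1 h2] := @pa_t _ x' _ (lt0r_neq0 hy'); rewrite !ltW.
Qed.

Lemma pa_mono_neg (R : realType) (x y x' y' : R) : y < 0 -> y' < 0 ->
  polar_angle x y <= polar_angle x' y' -> x' / y' <= x / y.
Proof.
move=> hy hy'; rewrite /polar_angle.
have -> : (0 <= y) = false by rewrite leNgt hy.
have -> : (0 <= y') = false by rewrite leNgt hy'.
move=> /= h.
have h2 : acos (x' / Num.sqrt (x' ^+ 2 + y' ^+ 2)) <= acos (x / Num.sqrt (x ^+ 2 + y ^+ 2)) by lra.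
have /andP[h3 h4] := @pa_t _ x _ (ltr0_neq0 hy).
have /andP[h5 h6] := @pa_t _ x' _ (ltr0_neq0 hy').
have := @acos_anti R _ _ _ _ h2.
move=> /(_ _ _) H; have {H} := H; rewrite (ltW h3) (ltW h4) (ltW h5) (ltW h6) => /(_ isT isT).
rewrite -(sqrrN y) -(sqrrN y') => /alg1.
rewrite !oppr_gt0 => /(_ hy' hy).
by rewrite !invrN !mulrN lerN2.
Qed.


Lemma run_inv (R : realType) (C g : nat -> R) (good : nat -> bool) i k :
  (i <= k)%N ->
  (forall t q, (i <= t)%N -> (t <= q)%N -> (q <= k)%N -> good t -> good q -> g q <= g t) ->
  (forall t, (i <= t)%N -> (t < k)%N -> ~~ good t -> C t.+1 = C t) ->
  (forall t v, (i <= t)%N -> (t < k)%N -> good t -> g t <= C t -> v <= C t -> v <= g t -> v <= C t.+1) ->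
  good i -> g i <= C i -> good k -> g k <= C k.
Proof.
move=> hik hmono hid hstep gi hi gk.
suff H : forall d, (i + d <= k)%N -> forall q, (i + d <= q)%N -> (q <= k)%N -> good q -> g q <= C (i + d)%N.
  by have := H (k - i)%N; rewrite !(subnKC hik) => /(_ (leqnn k) k (leqnn k) (leqnn k) gk).
elim=> [|d IH] hd q hq1 hq2 gq.
  rewrite addn0; apply: le_trans hi; apply: hmono => //; by rewrite addn0 in hq1.
have hd' : (i + d < k)%N by rewrite addnS in hd.
rewrite addnS.
case gt: (good (i + d)).
  apply: (hstep _ _ (leq_addr _ _)) => //.
  - by apply: IH => //; apply: ltnW.
  - apply: IH => //; [exact: ltnW | rewrite addnS in hq1; exact: ltnW].
  - apply: hmono => //; [exact: leq_addr | rewrite addnS in hq1; exact: ltnW].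
rewrite hid ?leq_addr ?gt //.
apply: IH => //; [exact: ltnW | rewrite addnS in hq1; exact: ltnW].
Qed.

Lemma AL1 (R : realType) (x y : R) : ~~ ((y == 0) && (x == 0)) ->
  pi < polar_angle x y -> y < 0.
Proof.
move=> nz h; case: (ltrgtP y 0) => // hy.
- by have := @pa_pos _ x _ hy; move=> /andP[_ h2]; have := lt_trans h h2; rewrite ltxx.
- move: nz h; rewrite hy eqxx /=; case: (ltrgtP x 0) => // hx _.
  + by rewrite pa_xneg // ltxx.
  + by rewrite pa_xpos // => h; have := lt_trans h (@pi_gt0 R); rewrite ltxx.
Qed.

Lemma AL2 (R : realType) (x y : R) : ~~ ((y == 0) && (x == 0)) ->
  0 < polar_angle x y -> polar_angle x y < pi -> 0 < y.
Proof.
move=> nz h1 h2; case: (ltrgtP y 0) => // hy.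
- by have := @pa_neg _ x _ hy => h; have := lt_trans h h2; rewrite ltxx.
- move: nz h1 h2; rewrite hy eqxx /=; case: (ltrgtP x 0) => // hx _.
  + by rewrite pa_xneg // ltxx.
  + by rewrite pa_xpos // ltxx.
Qed.


Lemma core (R : realType) (m : nat) (A B C : nat -> R) (h : R) :
  0 <= h ->
  (forall t, (t < m)%N -> 0 < A t) ->
  (forall t, (t < m)%N -> C t.+1 = A t * C t + h * B t) ->
  (forall t q, (t < q)%N -> (q < m)%N -> ~~ ((A t == 1) && (B t == 0)) ->
     ~~ ((A q == 1) && (B q == 0)) ->
     polar_angle (B t) (1 - A t) <= polar_angle (B q) (1 - A q)) ->
  forall i j k, (i < j)%N -> (j < k)%N -> (k < m)%N ->
  C i.+1 < C i -> C j < C j.+1 -> C k.+1 < C k -> False.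
Proof.
move=> h0 HA HC Hs i j k ij jk km Di Dj Dk.
pose Th t := polar_angle (B t) (1 - A t).
have Hs' t q : (t <= q)%N -> (q < m)%N -> ~~ ((A t == 1) && (B t == 0)) ->
     ~~ ((A q == 1) && (B q == 0)) -> Th t <= Th q.
  rewrite leq_eqVlt => /orP[/eqP -> //|]; exact: Hs.
have NZ t : ~~ ((A t == 1) && (B t == 0)) -> ~~ ((1 - A t == 0) && (B t == 0)).
  by rewrite subr_eq0 eq_sym.
have idC t : (t < m)%N -> ~~ ~~ ((A t == 1) && (B t == 0)) -> C t.+1 = C t.
  move=> tm; rewrite negbK => /andP[/eqP a1 /eqP b0]; rewrite HC // a1 b0; ring.
have nid t : (t < m)%N -> C t.+1 != C t -> ~~ ((A t == 1) && (B t == 0)).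
  move=> tm ne; apply/negP => H; move: ne; rewrite idC ?eqxx ?negbK // H.
have im : (i < m)%N by apply: (ltn_trans ij); apply: (ltn_trans jk).
have jm : (j < m)%N by apply: (ltn_trans jk).
have ni := nid i im (negbT (lt_eqF Di)).
have nj := nid j jm (negbT (gt_eqF Dj)).
have nk := nid k km (negbT (lt_eqF Dk)).
pose g t := h * (B t / (1 - A t)).
have ge t : 1 - A t != 0 -> g t * (1 - A t) = h * B t.
  by move=> nz; rewrite /g -mulrA divfK.
case: (ltrgtP (1 - A j) 0) => yj.
-
  have piltj : pi < Th j by apply: pa_neg.
  have lowk q : (j <= q)%N -> (q <= k)%N -> ~~ ((A q == 1) && (B q == 0)) -> 1 - A q < 0.
    move=> jq qk nq; apply: AL1; first exact: NZ.
    apply: lt_le_trans piltj _; apply: Hs' => //; exact: leq_ltn_trans qk km.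
  have Hgk : g k <= C k.
    apply: (@run_inv R C g (fun t => 1 - A t < 0) j k (ltnW jk)).
    + move=> t q jt tq qk gt gq.
      have qm : (q < m)%N by exact: leq_ltn_trans qk km.
      have nt : ~~ ((A t == 1) && (B t == 0)).
        by apply/negP => /andP[/eqP a1 _]; move: gt; rewrite a1 subrr ltxx.
      have nq : ~~ ((A q == 1) && (B q == 0)).
        by apply/negP => /andP[/eqP a1 _]; move: gq; rewrite a1 subrr ltxx.
      rewrite /g; apply: ler_wpM2l => //.
      by apply: pa_mono_neg => //; apply: Hs'.
    + move=> t jt tk ngt; apply: idC; first exact: ltn_trans tk km.
      apply/negP => nt; move: ngt; rewrite lowk //; exact: ltnW.
    + move=> t v jt tk gt hg hv _.
      have tm : (t < m)%N by exact: ltn_trans tk km.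
      have e := ge t (ltr0_neq0 gt).
      rewrite HC //.
      have : C t * (1 - A t) <= h * B t by rewrite -e; apply: ler_wnM2r => //; exact: ltW.
      nra.
    + done.
    + have e := ge j (ltr0_neq0 yj).
      have : h * B j > (1 - A j) * C j.
        by move: Dj; rewrite HC //; nra.
      rewrite -e => H; rewrite leNgt; apply/negP => H2.
      nra.
    + exact: (lowk k (ltnW jk) (leqnn k) nk).
  have e := ge k (ltr0_neq0 (lowk k (ltnW jk) (leqnn k) nk)).
  have yk := lowk k (ltnW jk) (leqnn k) nk.
  move: Dk; rewrite HC //.
  have : C k * (1 - A k) <= h * B k by rewrite -e; apply: ler_wnM2r => //; exact: ltW.
  nra.
-
  have [Thj0 Thjpi] : 0 < Th j /\ Th j < pi by have /andP[] := @pa_pos _ (B j) _ yj.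
  have Thij : Th i <= Th j by apply: Hs' => //; exact: ltnW.
  have yi : 0 < 1 - A i.
    case: (ltrgtP (1 - A i) 0) => // yi.
    + have := @pa_neg _ (B i) _ yi => H; have := lt_trans H (le_lt_trans Thij Thjpi).
      by rewrite ltxx.
    + have bi : B i < 0.
        move: Di; rewrite HC //.
        have -> : A i = 1 by lra.
        rewrite mul1r => H.
        rewrite ltNge; apply/negP => hb; have : 0 <= h * B i by apply: mulr_ge0.
        lra.
      move: Thij; rewrite /Th yi pa_xneg // => H.
      by have := le_lt_trans H Thjpi; rewrite ltxx.
  have Thi0 : 0 < Th i by have /andP[] := @pa_pos _ (B i) _ yi.
  have upt q : (i <= q)%N -> (q <= j)%N -> ~~ ((A q == 1) && (B q == 0)) -> 0 < 1 - A q.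
    move=> iq qj nq; apply: AL2; first exact: NZ.
    + apply: lt_le_trans Thi0 _; apply: Hs' => //; exact: leq_ltn_trans qj jm.
    + apply: le_lt_trans Thjpi; apply: Hs' => //.
  have Hgj : g j <= C j.
    apply: (@run_inv R C g (fun t => 0 < 1 - A t) i j (ltnW ij)).
    + move=> t q it tq qj gt gq.
      have qm : (q < m)%N by exact: leq_ltn_trans qj jm.
      have nt : ~~ ((A t == 1) && (B t == 0)).
        by apply/negP => /andP[/eqP a1 _]; move: gt; rewrite a1 subrr ltxx.
      have nq : ~~ ((A q == 1) && (B q == 0)).
        by apply/negP => /andP[/eqP a1 _]; move: gq; rewrite a1 subrr ltxx.
      rewrite /g; apply: ler_wpM2l => //.
      by apply: pa_mono_pos => //; apply: Hs'.
    + move=> t it tj ngt; apply: idC; first exact: ltn_trans tj jm.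
      apply/negP => nt; move: ngt; rewrite upt //; exact: ltnW.
    + move=> t v it tj gt hg hv hvg.
      have tm : (t < m)%N by exact: ltn_trans tj jm.
      have e := ge t (lt0r_neq0 gt).
      have at0 := HA t tm.
      rewrite HC // -e.
      nra.
    + done.
    + have e := ge i (lt0r_neq0 yi).
      have : h * B i < (1 - A i) * C i.
        by move: Di; rewrite HC //; nra.
      rewrite -e => H; rewrite leNgt; apply/negP => H2.
      nra.
    + done.
  have e := ge j (lt0r_neq0 yj).
  move: Dj; rewrite HC //.
  have : g j * (1 - A j) <= C j * (1 - A j) by apply: ler_wpM2r => //; exact: ltW.
  rewrite e; nra.
-
  have aj : A j = 1 by lra.
  have bj : 0 < B j.
    move: Dj; rewrite HC // aj mul1r => H.
    rewrite ltNge; apply/negP => hb.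
    have : h * B j <= 0 by rewrite mulr_ge0_le0.
    lra.
  have Thj : Th j = 0 by rewrite /Th yj pa_xpos.
  have Thij : Th i <= 0 by rewrite -Thj; apply: Hs' => //; exact: ltnW.
  case: (ltrgtP (1 - A i) 0) => yi.
  + have := @pa_neg _ (B i) _ yi => H; have := lt_le_trans (lt_trans (@pi_gt0 R) H) Thij.
    by rewrite ltxx.
  + have /andP[H _] := @pa_pos _ (B i) _ yi; have := lt_le_trans H Thij.
    by rewrite ltxx.
  + have ai : A i = 1 by lra.
    have bi : B i < 0.
      move: Di; rewrite HC // ai mul1r => H.
      rewrite ltNge; apply/negP => hb; have : 0 <= h * B i by apply: mulr_ge0.
      lra.
    move: Thij; rewrite /Th yi pa_xneg // => H.
    by have := le_lt_trans H (@pi_gt0 R); rewrite ltxx.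
Qed.


Definition UM (R : realType) (m : nat) (E : nat -> R) : Prop :=
  exists k j : nat, [/\ (j < m)%N,
    (forall i, (i < j)%N -> E (k + i)%N <= E (k + i.+1)%N) &
    (forall i, (j <= i)%N -> (i < m)%N -> E (k + i.+1)%N <= E (k + i)%N)].
Arguments UM {R}.

Lemma chain (R : realType) (m : nat) (E : nat -> R) k :
  (forall i, E (i + m)%N = E i) ->
  (forall i, (i < m)%N -> E (k + i)%N <= E (k + i.+1)%N) ->
  forall i, (i < m)%N -> E (k + i.+1)%N <= E (k + i)%N.
Proof.
move=> per up.
have mono u v : (u <= v)%N -> (v <= m)%N -> E (k + u)%N <= E (k + v)%N.
  move=> uv vm; elim: v uv vm => [|v IH] uv vm.
    by rewrite leqn0 in uv; rewrite (eqP uv).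
  case: (ltngtP u v.+1) uv => // [uv|-> //] _.
  apply: le_trans (IH uv (ltnW vm)) _; exact: up.
move=> i im.
have e : E (k + m)%N = E (k + 0)%N by rewrite addn0 per.
apply: le_trans (mono _ _ im (leqnn m)) _.
by rewrite e; apply: mono => //; exact: ltnW.
Qed.

Lemma P1 (R : realType) (m : nat) (E : nat -> R) r : (0 < m)%N ->
  (forall i, E (i + m)%N = E i) ->
  (forall i j k, (i < j)%N -> (j < k)%N -> (k < m)%N ->
     ~ [/\ E (r + i.+1)%N < E (r + i)%N, E (r + j)%N < E (r + j.+1)%N &
           E (r + k.+1)%N < E (r + k)%N]) ->
  UM m E.
Proof.
move=> m0 per nopat.
have shift u v : u = (v + m)%N -> E u = E v by move=> ->; exact: per.
case: (boolP [exists i : 'I_m, E (r + i.+1)%N < E (r + i)%N]) => [/existsP ex|nex]; last first.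
  have up i : (i < m)%N -> E (r + i)%N <= E (r + i.+1)%N.
    move=> im; rewrite leNgt; apply/negP => H; move/existsP: nex; apply.
    by exists (Ordinal im).
  exists r, 0%N; split => //.
  by move=> i _; apply: chain.
have ex' : exists i, (i < m)%N && (E (r + i.+1)%N < E (r + i)%N).
  by case: ex => i hi; exists (nat_of_ord i); rewrite ltn_ord hi.
case: (ex_minnP ex') => i0 /andP[i0m Di0] mini0.
have below i : (i < i0)%N -> E (r + i)%N <= E (r + i.+1)%N.
  move=> ii0; rewrite leNgt; apply/negP => H.
  have := mini0 i; rewrite H andbT (ltn_trans ii0 i0m) => /(_ isT).
  by rewrite leqNgt ii0.
case: (boolP [exists j : 'I_m, (i0 < j)%N && (E (r + j)%N < E (r + j.+1)%N)]) => [/existsP ex2|nex2]; last first.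
  exists r, i0; split => //.
  move=> i i0i im; case: (ltngtP i0 i) i0i => // [lt _|<- _]; last exact: ltW.
  rewrite leNgt; apply/negP => H; move/existsP: nex2; apply.
  by exists (Ordinal im); rewrite lt H.
have ex2' : exists j, [&& (j < m)%N, (i0 < j)%N & (E (r + j)%N < E (r + j.+1)%N)].
  by case: ex2 => j /andP[h1 h2]; exists (nat_of_ord j); rewrite ltn_ord h1 h2.
case: (ex_minnP ex2') => j0 /and3P[j0m i0j0 Dj0] minj0.
have after i : (j0 <= i)%N -> (i < m)%N -> E (r + i)%N <= E (r + i.+1)%N.
  move=> j0i im; case: (ltngtP j0 i) j0i => // [lt _|<- _]; last exact: ltW.
  rewrite leNgt; apply/negP => H.
  by apply: (nopat i0 j0 i) => //.
have mid i : (i0 <= i)%N -> (i < j0)%N -> E (r + i.+1)%N <= E (r + i)%N.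
  move=> i0i ij0; case: (ltngtP i0 i) i0i => // [lt _|<- _]; last exact: ltW.
  rewrite leNgt; apply/negP => H.
  have := minj0 i; rewrite H lt (ltn_trans ij0 j0m) => /(_ isT).
  by rewrite leqNgt ij0.
exists (r + j0)%N, (m - j0 + i0)%N; split.
- lia.
- move=> i ij.
  case: (ltnP i (m - j0)) => h.
    by rewrite -!addnA addnS; apply: after; lia.
  rewrite (shift (r + j0 + i)%N (r + (j0 + i - m))%N); last by lia.
  rewrite (shift (r + j0 + i.+1)%N (r + (j0 + i - m).+1)%N); last by lia.
  apply: below; lia.
- move=> i ji im.
  rewrite (shift (r + j0 + i)%N (r + (j0 + i - m))%N); last by lia.
  rewrite (shift (r + j0 + i.+1)%N (r + (j0 + i - m).+1)%N); last by lia.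
  apply: mid; lia.
Qed.

Lemma UM_neg (R : realType) (m : nat) (E : nat -> R) :
  (forall i, E (i + m)%N = E i) -> UM m (fun i => - E i) -> UM m E.
Proof.
move=> per [k [j [jm H1 H2]]].
have shift u v : u = (v + m)%N -> E u = E v by move=> ->; exact: per.
case: (posnP j) => [j0|jpos].
  have up i : (i < m)%N -> E (k + i)%N <= E (k + i.+1)%N.
    by move=> im; have := H2 i; rewrite j0 lerN2 => /(_ isT im).
  exists k, 0%N; split => //; first by rewrite -j0.
  by move=> i _; apply: chain.
exists (k + j)%N, (m - j)%N; split.
- lia.
- move=> i ij; have := H2 (j + i)%N; rewrite lerN2 => h.
  have -> : (k + j + i.+1 = k + (j + i).+1)%N by lia.
  have -> : (k + j + i = k + (j + i))%N by lia.
  apply: h; lia.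
- move=> i ji im.
  rewrite (shift (k + j + i)%N (k + (j + i - m))%N); last by lia.
  rewrite (shift (k + j + i.+1)%N (k + (j + i - m).+1)%N); last by lia.
  have := H1 (j + i - m)%N; rewrite lerN2 => -> //; lia.
Qed.


Lemma comp_affine (R : realType) n (a b : 'I_n -> R) s x :
  comp_seq a b s x = (\prod_(i <- s) a i) * x + comp_seq a b s 0.
Proof.
rewrite /comp_seq; elim: s x => [|y s IH] x /=; first by rewrite big_nil mul1r addr0.
by rewrite IH [X in _ = _ + X]IH big_cons /linf; ring.
Qed.

Lemma comp_step (R : realType) n (a b : 'I_n -> R) s q x0 : (q < size s)%N ->
  comp_seq a b (rot q.+1 s) 0 =
  a (nth x0 s q) * comp_seq a b (rot q s) 0 + (1 - \prod_(i <- s) a i) * b (nth x0 s q).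
Proof.
move=> qs.
have E : rot q s = nth x0 s q :: (drop q.+1 s ++ take q s) by rewrite /rot (drop_nth x0).
have pr : perm_eq (rot q s) s by rewrite perm_rot.
rewrite rotS // -(perm_big _ pr) E rot1_cons big_cons.
set y := nth x0 s q; set t := (drop q.+1 s ++ take q s).
rewrite {1}/comp_seq foldl_rcons -/(comp_seq a b t 0) /=.
rewrite /linf mulr0 add0r (@comp_affine R n a b t (b y)).
set P0 := \prod_(i <- t) a i; set C0 := comp_seq a b t 0.
clearbody P0 C0. ring.
Qed.

Lemma rotmod (T : Type) (s : seq T) r t : (r < size s)%N -> (t < size s)%N ->
  rot t (rot r s) = rot ((r + t) %% size s) s.
Proof.
move=> rs ts; rewrite rot_add_mod; [|exact: ltnW|exact: ltnW].
case: leqP => h.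
  case: (ltngtP (t + r) (size s)) h => // [lt|eq] _.
    by rewrite [(r + t)%N]addnC modn_small.
  by rewrite [(r + t)%N]addnC eq modnn rot_size rot0.
rewrite (_ : (r + t) = (t + r - size s) + size s)%N; last by lia.
by rewrite modnDr modn_small //; lia.
Qed.

Lemma filter_take_drop (T : eqType) (P : pred T) x s : P x ->
  filter P (take (index x s) s) = take (index x (filter P s)) (filter P s) /\
  filter P (drop (index x s) s) = drop (index x (filter P s)) (filter P s).
Proof.
move=> Px; elim: s => [|y s [IH1 IH2]] //=.
case: (eqVneq y x) => [->|ne] /=; first by rewrite Px /= eqxx.
case Py: (P y) => /=; last by [].
by rewrite (negbTE ne) /= IH1 IH2.
Qed.

Lemma rot_filter_ex (T : eqType) (P : pred T) (s : seq T) k : (0 < size s)%N -> uniq s ->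
  exists r, (r < size s)%N /\ filter P (rot r s) = rot k (filter P s).
Proof.
move=> s0 us.
case: (ltnP k (size (filter P s))) => kf; last first.
  by exists 0%N; rewrite rot0 rot_oversize.
case: s s0 us kf => // y s' _ us kf.
set s := y :: s'.
set x := nth y (filter P s) k.
have xf : x \in filter P s by apply: mem_nth.
have Px : P x by move: xf; rewrite mem_filter => /andP[].
have xs : x \in s by move: xf; rewrite mem_filter => /andP[].
exists (index x s); split; first by rewrite index_mem.
have [H1 H2] := @filter_take_drop _ P x s Px.
have ix : index x (filter P s) = k by rewrite index_uniq // filter_uniq.
by rewrite /rot filter_cat H1 H2 ix.
Qed.

Lemma sorted_nth (R : realType) (T : eqType) (P : pred T) (f : T -> R) s x0 :
  sorted <=%R (map f (filter P s)) ->
  forall i j, (i < j)%N -> (j < size s)%N -> P (nth x0 s i) -> P (nth x0 s j) ->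
  f (nth x0 s i) <= f (nth x0 s j).
Proof.
elim: s => [|y s IH] //= so [|i] [|j] // ij js Pi Pj /=.
- have Pj' : nth x0 s j \in filter P s by rewrite mem_filter Pj mem_nth.
  move: so; rewrite /= Pi /= => /(order_path_min le_trans).
  by move=> /allP; apply; apply: map_f.
- apply: IH => //.
  by move: so; case: (P y) => //= /path_sorted.
Qed.


Theorem mainTheorem11 (R : realType) (n : nat) (a b : 'I_n -> R) (tau : 'S_n) :
  (0 < n)%N ->
  (forall i, monotone a i) ->
  counterclockwise a b tau ->
  cyc_unimodal (@fle R) n (fun k => fshift a b tau k).
Proof.
move=> n0 mono [k0 so].
set p := perm_seq tau.
have sp : size p = n by rewrite /p /perm_seq size_map size_enum_ord.
have up : uniq p by rewrite /p /perm_seq map_inj_uniq ?enum_uniq //; exact: perm_inj.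
set Pn := fun i => ~~ identical a b i.
have sp0 : (0 < size p)%N by rewrite sp.
have [r [rn fr]] := @rot_filter_ex _ Pn p k0 sp0 up.
rewrite sp in rn.
set s := rot r p.
have ss : size s = n by rewrite size_rot.
have sos : sorted <=%R (map (theta a b) (filter Pn s)) by rewrite /s fr map_rot.
pose x0 := Ordinal n0.
set P := \prod_(i <- p) a i.
have Ps : \prod_(i <- s) a i = P by apply: perm_big; rewrite perm_rot.
pose h := 1 - P.
pose A t := a (nth x0 s t).
pose B t := b (nth x0 s t).
pose C t := comp_seq a b (rot t s) 0.
have HA t : (t < n)%N -> 0 < A t by move=> _; apply: mono.
have HC t : (t < n)%N -> C t.+1 = A t * C t + h * B t.
  by move=> tn; rewrite /C (@comp_step R n a b s t x0) ?ss // Ps.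
have Hs t q : (t < q)%N -> (q < n)%N -> ~~ ((A t == 1) && (B t == 0)) ->
     ~~ ((A q == 1) && (B q == 0)) ->
     polar_angle (B t) (1 - A t) <= polar_angle (B q) (1 - A q).
  move=> tq qn nt nq.
  change (theta a b (nth x0 s t) <= theta a b (nth x0 s q)).
  by apply: (@sorted_nth R _ Pn (theta a b) s x0 sos) => //; rewrite ss.
pose E k := comp_seq a b (rot (k %% n) p) 0.
have per i : E (i + n)%N = E i by rewrite /E modnDr.
have CE t : (t <= n)%N -> C t = E (r + t)%N.
  move=> tn; case: (ltngtP t n) tn => // [lt|->] _.
    by rewrite /C /E /s rotmod ?sp.
  have rs : rot n s = s by move: (rot_size s); rewrite ss.
  by rewrite /C /E rs modnDr modn_small.
have UE : UM n E.
  have [h0|hn] := lerP 0 h.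
    apply: (@P1 R n E r n0 per) => i j k ij jk kn [Di Dj Dk].
    apply: (@core R n A B C h h0 HA HC Hs i j k ij jk kn).
    - by rewrite !CE //; lia.
    - by rewrite !CE //; lia.
    - by rewrite !CE //; lia.
  apply: UM_neg => //.
  apply: (@P1 R n (fun i => - E i) r n0) => [i|i j k ij jk kn [Di Dj Dk]]; first by rewrite per.
  have h0 : 0 <= - h by lra.
  have HC' t : (t < n)%N -> - C t.+1 = A t * - C t + - h * B t.
    by move=> tn; rewrite HC //; ring.
  apply: (@core R n A B (fun t => - C t) (- h) h0 HA HC' Hs i j k ij jk kn).
  - by rewrite !CE //; lia.
  - by rewrite !CE //; lia.
  - by rewrite !CE //; lia.
case: UE => k [j [jn H1 H2]].
have fleE u v : E u <= E v -> fle (fshift a b tau (u %% n)) (fshift a b tau (v %% n)).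
  move=> Huv x; rewrite /fshift /shift_seq -/p.
  rewrite (@comp_affine R n a b (rot (u %% n) p)) (@comp_affine R n a b (rot (v %% n) p)).
  have -> : \prod_(i <- rot (u %% n) p) a i = P by apply: perm_big; rewrite perm_rot.
  have -> : \prod_(i <- rot (v %% n) p) a i = P by apply: perm_big; rewrite perm_rot.
  by rewrite lerD2l.
exists (k %% n)%N, j; split => //.
- by rewrite ltn_mod.
- move=> i ij; rewrite !modnDml -addnS; apply: fleE.
  have := H1 i ij; rewrite /E !modnDml //.
- move=> i /andP[ji im]; rewrite !modnDml -addnS; apply: fleE.
  have := H2 i ji im; rewrite /E !modnDml //.
Qed.
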